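(* Let $\mathbb N$ be a 2-connected symmetric directed graph on $m\ge2$ vertices without self-arcs, and suppose the matrices satisfy $C_{ij}=C_{ji}$ for every pair of arcs $(i,j),(j,i)$; write $\mathcal K_{\{i,j\}}=\ker C_{ij}=\ker C_{ji}$. Let $\mathrm D$ be a symmetric ear decomposition of $\mathbb N$. If for every symmetric ear $\mathbb E\in\mathrm D$ the family $\{\mathcal K_{\{i,j\}}:\{i,j\}\text{ a two-length cycle of }\mathbb E\}$ (indexed by the two-length cycles of $\mathbb E$) is independent, then $\bar{\mathbb N}$ is well-configured. Moreover, if $\max_{\mathbb E\in\mathrm D} l(\mathbb E)\le n$, then there exist matrices with $C_{ij}=C_{ji}$ and $\ker C_{ij}\neq 0$ for all arcs such that $\bar{\mathbb N}$ is well-configured.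
   Context: A directed graph is symmetric if whenever $(i,j)$ is an arc so is $(j,i)$; a two-length cycle is such a pair of arcs $\{(i,j),(j,i)\}$. A symmetric directed graph is $k$-connected if after removing any $k-1$ two-length cycles (both arcs of each) the resulting graph is still strongly connected. Setup: $m$ agents with states $x_i\in\mathbb R^n$; each arc $(j,i)$ carries a real matrix $C_{ji}$ with $n$ columns; $\bar{\mathbb N}$ is well-configured if for all $x_1,\dots,x_m\in\mathbb R^n$, $C_{ji}x_i=C_{ji}x_j$ for every arc $(j,i)$ implies $x_1=\cdots=x_m$. A finite indexed family of subspaces $\{\mathcal S_1,\dots,\mathcal S_p\}$ is independent if $\mathcal S_i\cap\sum_{j\ne i}\mathcal S_j=0$ for every $i$. A symmetric directed path has distinct vertices $v_0,\dots,v_k$ ($k\ge1$) and exactly the arcs $(v_{r-1},v_r),(v_r,v_{r-1})$, $r=1,\dots,k$; its end-vertices are $v_0,v_k$. A symmetric directed cycle has distinct vertices $v_1,\dots,v_k$ ($k\ge3$) and exactly the arcs $(v_r,v_{r+1}),(v_{r+1},v_r)$ for $r=1,\dots,k$ (indices mod $k$). A symmetric ear decomposition of a symmetric directed graph $\mathbb G$ is a sequence $\mathbb E_0,\dots,\mathbb E_p$ of subgraphs where $\mathbb E_0$ is a symmetric directed cycle, each $\mathbb E_i$ ($i\ge1$) is a symmetric directed path or symmetric directed cycle, the $\mathbb E_i$ are pairwise arc-disjoint with union $\mathbb G$, and for $i\ge1$: a symmetric cycle $\mathbb E_i$ has exactly one vertex in common with $\bigcup_{k<i}\mathbb E_k$,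 and a symmetric path $\mathbb E_i$ has its two end-vertices as the only vertices in common with $\bigcup_{k<i}\mathbb E_k$. The length $l(\mathbb E)$ of a symmetric ear is its number of two-length cycles. *)

(* Defs.v *)
From HB Require Import structures.
From mathcomp Require Import all_boot all_order all_algebra.
Set Implicit Arguments. Unset Strict Implicit. Unset Printing Implicit Defensive.
Import Order.TTheory GRing.Theory Num.Theory.

Section Graphs.
Variable m : nat.
Local Notation V := 'I_m.

Definition sym_graph (e : rel V) : Prop := forall i j, e i j = e j i.
Definition no_self_arcs (e : rel V) : Prop := forall i, ~~ e i i.
Definition strongly_connected (e : rel V) : Prop := forall i j, connect e i j.

Definition remove_tlc (e : rel V) (a b : V) : rel V :=
  fun i j => e i j && ~~ (((i == a) && (j == b)) || ((i == b) && (j == a))).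

Definition two_connected (e : rel V) : Prop :=
  forall a b, e a b -> strongly_connected (remove_tlc e a b).

(* A symmetric ear: a symmetric directed path with vertex list [v0; ...; vk],
   or a symmetric directed cycle with vertex list [v1; ...; vk]. *)
Inductive sym_ear := SPath of seq V | SCycle of seq V.

Definition ear_verts (E : sym_ear) : seq V :=
  match E with SPath s => s | SCycle s => s end.

Definition ear_tlcs (E : sym_ear) : seq (V * V) :=
  match E with
  | SPath s => zip s (behead s)
  | SCycle s => match s with [::] => [::] | v :: t => zip s (rcons t v) end
  end.

Definition ear_length (E : sym_ear) : nat := size (ear_tlcs E).

Definition ear_wf (E : sym_ear) : bool :=
  match E with
  | SPath s => uniq s && (2 <= size s)
  | SCycle s => uniq s && (3 <= size s)
  end.

Definition ear_arc (E : sym_ear) (i j : V) : bool :=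
  ((i, j) \in ear_tlcs E) || ((j, i) \in ear_tlcs E).

Definition ear0 : sym_ear := SPath [::].

Definition attach_ok (prev : seq V) (E : sym_ear) : Prop :=
  match E with
  | SPath s => match s with
               | [::] => False
               | v0 :: w => forall v, v \in s ->
                    (v \in prev) = ((v == v0) || (v == last v0 w))
               end
  | SCycle s => count (fun v => v \in prev) s = 1%N
  end.

Definition sym_ear_decomposition (e : rel V) (D : seq sym_ear) : Prop :=
  [/\ (match D with SCycle _ :: _ => True | _ => False end) /\ all ear_wf D,
      (forall t1 t2, (t1 < size D)%N -> (t2 < size D)%N -> t1 != t2 ->
         forall i j, ear_arc (nth ear0 D t1) i j -> ~~ ear_arc (nth ear0 D t2) i j),
      (forall i j, e i j <-> (exists2 t, (t < size D)%N & ear_arc (nth ear0 D t) i j)),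
      (forall v : V, (exists2 t, (t < size D)%N & v \in ear_verts (nth ear0 D t)))
    & (forall t, (0 < t < size D)%N ->
         attach_ok (flatten (map ear_verts (take t D))) (nth ear0 D t))].

End Graphs.

Arguments SPath {m}.
Arguments SCycle {m}.
Arguments ear0 {m}.

Local Open Scope ring_scope.

Section Matrices.
Variables (R : fieldType) (m n : nat).
Local Notation V := 'I_m.
Variables (r : V -> V -> nat) (C : forall i j : V, 'M[R]_(r i j, n)).

Definition sym_weights (e : rel V) : Prop :=
  forall i j, e i j -> exists H : r i j = r j i, castmx (H, erefl n) (C i j) = C j i.

Definition well_configured (e : rel V) : Prop :=
  forall x : V -> 'cV[R]_n,
    (forall i j, e j i -> C j i *m x i = C j i *m x j) ->
    forall i j, x i = x j.

(* ker C (as a subspace of column vectors, represented in MathComp's row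
   convention: the row space of kermx C^T is {x | C x = 0} transposed) *)
Definition kerC (i j : V) : 'M[R]_n := kermx (C i j)^T.

End Matrices.

Definition independent_family (R : fieldType) (n k : nat) (K : 'I_k -> 'M[R]_n) : Prop :=
  forall i : 'I_k, (K i :&: \sum_(j | j != i) K j)%MS = 0.

Definition ear_kernels_independent (R : fieldType) (m n : nat)
    (r : 'I_m -> 'I_m -> nat) (C : forall i j, 'M[R]_(r i j, n)) (E : sym_ear m) : Prop :=
  independent_family
    (fun k : 'I_(size (ear_tlcs E)) =>
       let p := tnth (in_tuple (ear_tlcs E)) k in kerC C p.1 p.2).

(* Main.v *)
Require Import Defs.
From HB Require Import structures.
From mathcomp Require Import all_boot all_order all_algebra.
Import Order.TTheory GRing.Theory Num.Theory.
Local Open Scope ring_scope.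

Lemma indep_zero (R : fieldType) (n k : nat) (K : 'I_k -> 'M[R]_n)
  (u : 'I_k -> 'rV[R]_n) :
  independent_family K -> (forall i, (u i <= K i)%MS) -> \sum_i u i = 0 ->
  forall i, u i = 0.
Proof.
move=> Hind Hu Hs i.
have Hi : u i = - \sum_(j | j != i) u j.
  apply/eqP; rewrite eq_sym eqr_oppLR; apply/eqP.
  move: Hs; rewrite (bigD1 i) //= => /eqP; rewrite addr_eq0 => /eqP ->.
  by rewrite opprK.
apply/eqP; rewrite -submx0 -(Hind i); rewrite sub_capmx Hu /=.
rewrite Hi eqmx_opp; apply: summx_sub_sums => j _; exact: Hu.
Qed.

Section Seqs.
Variables (T : eqType) (M : zmodType) (x : T -> M).

Lemma tele_path v0 w :
  \sum_(p <- zip (v0 :: w) w) (x p.2 - x p.1) = x (last v0 w) - x v0.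
Proof.
elim: w v0 => [|a w IH] v0 /=; first by rewrite big_nil subrr.
rewrite big_cons /= IH addrC addrA subrK //.
Qed.

Lemma tele_cyc v0 t v :
  \sum_(p <- zip (v0 :: t) (rcons t v)) (x p.2 - x p.1) = x v - x v0.
Proof.
elim: t v0 => [|a t IH] v0 /=; first by rewrite big_cons big_nil addr0.
rewrite big_cons /= IH addrC addrA subrK //.
Qed.

Lemma const_path v0 w :
  (forall p, p \in zip (v0 :: w) w -> x p.1 = x p.2) ->
  forall v, v \in v0 :: w -> x v = x v0.
Proof.
elim: w v0 => [|a w IH] v0 H v /=; first by rewrite inE => /eqP ->.
have ha : x v0 = x a by apply: (H (v0, a)); rewrite inE eqxx.
rewrite inE => /orP [/eqP -> //|].
move=> Hv; rewrite ha; apply: IH; last by move: Hv; rewrite ?inE.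
by move=> p Hp; apply: H; rewrite /= in_cons Hp orbT.
Qed.

Lemma const_cyc v0 t u :
  (forall p, p \in zip (v0 :: t) (rcons t u) -> x p.1 = x p.2) ->
  forall v, v \in v0 :: t -> x v = x v0.
Proof.
elim: t v0 => [|a t IH] v0 H v /=; first by rewrite inE => /eqP ->.
have ha : x v0 = x a by apply: (H (v0, a)); rewrite inE eqxx.
rewrite inE => /orP [/eqP -> //|].
move=> Hv; rewrite ha; apply: IH; last by move: Hv; rewrite ?inE.
by move=> p Hp; apply: H; rewrite /= in_cons Hp orbT.
Qed.
End Seqs.

Lemma mem_zip1 (T U : eqType) (s : seq T) (t : seq U) p :
  p \in zip s t -> p.1 \in s.
Proof.
elim: s t => [|a s IH] [|b t] //=; rewrite inE => /orP [/eqP -> /=|/IH].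
  by rewrite ?inE eqxx.
by rewrite ?inE => ->; rewrite orbT.
Qed.

Lemma mem_zip2 (T U : eqType) (s : seq T) (t : seq U) p :
  p \in zip s t -> p.2 \in t.
Proof.
elim: s t => [|a s IH] [|b t] //=; rewrite inE => /orP [/eqP -> /=|/IH].
  by rewrite ?inE eqxx.
by rewrite ?inE => ->; rewrite orbT.
Qed.

Section Ear.
Variables (R : fieldType) (m n : nat) (r : 'I_m -> 'I_m -> nat)
  (C : forall i j : 'I_m, 'M[R]_(r i j, n)) (x : 'I_m -> 'cV[R]_n).

Lemma ear_diffs_zero (E : sym_ear m) :
  ear_kernels_independent C E ->
  (forall p, p \in ear_tlcs E -> C p.1 p.2 *m (x p.2 - x p.1) = 0) ->
  \sum_(p <- ear_tlcs E) (x p.2 - x p.1) = 0 ->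
  forall p, p \in ear_tlcs E -> x p.1 = x p.2.
Proof.
move=> Hind Harc Hsum p Hp.
set tl := ear_tlcs E in Hind Harc Hsum Hp *.
pose u (k : 'I_(size tl)) := (x (tnth (in_tuple tl) k).2 - x (tnth (in_tuple tl) k).1)^T.
have Hu := @indep_zero R n (size tl) _ u Hind.
have H0 : forall k, u k = 0.
  apply: Hu.
    move=> k /=; rewrite /kerC sub_kermx /u -trmx_mul Harc ?trmx0 //.
    exact: mem_tnth.
  rewrite /u -raddf_sum /= -(big_tnth _ _ tl xpredT (fun p => x p.2 - x p.1)).
  by rewrite Hsum trmx0.
have /tnthP [k ->] : p \in in_tuple tl by [].
apply/eqP; rewrite eq_sym -subr_eq0.
by rewrite -[_ - _]trmxK -/(u k) H0 trmx0.
Qed.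
End Ear.

Definition endp_ok (R : fieldType) (m n : nat) (x : 'I_m -> 'cV[R]_n) (E : sym_ear m) :=
  match E with SPath (v0 :: w) => x (last v0 w) = x v0 | _ => True end.

Lemma part1 (R : fieldType) (m n : nat) (e : rel 'I_m) (D : seq (sym_ear m)) :
  sym_ear_decomposition e D ->
  forall (r : 'I_m -> 'I_m -> nat) (C : forall i j : 'I_m, 'M[R]_(r i j, n)),
    (forall t, (t < size D)%N -> ear_kernels_independent C (nth ear0 D t)) ->
    well_configured C e.
Proof.
case=> [[Hhd Hwf] Hdisj Harcs Hcov Hatt] r C Hind x Hx.
have HarcE : forall t, (t < size D)%N -> forall p, p \in ear_tlcs (nth ear0 D t) ->
    C p.1 p.2 *m (x p.2 - x p.1) = 0.
  move=> t Ht p Hp; have he : e p.1 p.2.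
    by apply/Harcs; exists t => //; rewrite /ear_arc -surjective_pairing Hp.
  by rewrite mulmxBr (Hx p.2 p.1 he) subrr.
have Hear : forall t, (t < size D)%N -> @endp_ok R m n x (nth ear0 D t) ->
    forall u, u \in ear_verts (nth ear0 D t) -> x u = x (head u (ear_verts (nth ear0 D t))).
  move=> t Ht Hend.
  have Hw : ear_wf (nth ear0 D t) by apply: (all_nthP ear0 Hwf).
  have Hz := @ear_diffs_zero R m n r C x _ (Hind t Ht) (HarcE t Ht).
  move: Hw Hend Hz; case: (nth ear0 D t) => [[|v0 w]|[|v0 w]] //= _ Hend Hz u Hu.
    apply: (@const_path _ _ x) Hu => p Hp; apply: Hz => //.
    by rewrite tele_path Hend subrr.
  apply: (@const_cyc _ _ x v0 w v0) Hu => p Hp; apply: Hz => //.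
  by rewrite tele_cyc subrr.
have Hpre : forall t, (0 < t <= size D)%N -> forall u v,
    u \in flatten (map (@ear_verts m) (take t D)) ->
    v \in flatten (map (@ear_verts m) (take t D)) -> x u = x v.
  elim=> [|t IH] // /andP [_ Ht] u v.
  rewrite (take_nth ear0 Ht) map_rcons flatten_rcons.
  set prev := flatten _.
  have [w0 [Hw0 Hw0p Hend]] : exists w0, [/\ w0 \in ear_verts (nth ear0 D t),
      (t > 0)%N -> w0 \in prev & @endp_ok R m n x (nth ear0 D t)].
    case: (posnP t) => [t0|tpos].
      have [s0 Hs0] : exists s, nth ear0 D 0 = SCycle s.
        by case: (D) Hhd => [|[s|s] D'] //; exists s.
      have Hw0' : ear_wf (nth ear0 D 0) by apply: (all_nthP ear0 Hwf); rewrite -t0.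
      rewrite t0 Hs0 in Hw0' *; case: s0 Hs0 Hw0' => [|v0 s] //= _ _.
      by exists v0; split => //; rewrite inE eqxx.
    have := Hatt t; rewrite tpos Ht => /(_ isT); rewrite -/prev.
    case: (nth ear0 D t) => [[|v0 w]|s] //= Hatt'.
      have h0 : v0 \in prev by rewrite Hatt' ?inE ?eqxx.
      have hl : last v0 w \in prev by rewrite Hatt' ?eqxx ?orbT // mem_last.
      exists v0; split => //; first by rewrite inE eqxx.
      symmetry; apply: IH => //; rewrite tpos /=; exact: ltnW.
    have : has (fun v => v \in prev) s by rewrite has_count Hatt'.
    by case/hasP => w0 Hw0 Hw0p; exists w0.
  have Hin : forall y, y \in prev ++ ear_verts (nth ear0 D t) -> x y = x w0.
    move=> y; rewrite mem_cat => /orP [Hy|Hy].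
      case: (posnP t) => [t0|tpos].
        by move: Hy; rewrite /prev t0 take0.
      apply: IH => //; last exact: Hw0p.
      by rewrite tpos ltnW.
    rewrite (Hear t Ht Hend y Hy) (Hear t Ht Hend w0 Hw0).
    by move: Hy; case: (ear_verts _).

  by move=> Hu Hv; rewrite (Hin u Hu) (Hin v Hv).
move=> i j.
have [ti Hti Hi] := Hcov i; have [tj Htj Hj] := Hcov j.
have Hsz : (0 < size D <= size D)%N.
  by rewrite leqnn andbT; apply: leq_ltn_trans Hti.
apply: (Hpre _ Hsz); rewrite take_size; apply/flattenP.
  by exists (ear_verts (nth ear0 D ti)) => //; rewrite -(nth_map ear0 [::]) // mem_nth // size_map.
by exists (ear_verts (nth ear0 D tj)) => //; rewrite -(nth_map ear0 [::]) // mem_nth // size_map.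
Qed.

Section UU.
Variable T : eqType.
Fixpoint uuniq (l : seq (T * T)) : bool :=
  if l is q :: l' then [&& q \notin l', (q.2, q.1) \notin l' & uuniq l'] else true.

Lemma find_uuniq q0 l k : uuniq l -> (k < size l)%N ->
  find (fun p => (p == ((nth q0 l k).1, (nth q0 l k).2)) || (p == ((nth q0 l k).2, (nth q0 l k).1))) l = k.
Proof.
elim: l k => [|q l IH] [|k] //=.
  by rewrite -surjective_pairing eqxx.
move=> /and3P [Hq Hsq Hu] Hk.
set p := nth q0 l k.
have Hn : p \in l by apply: mem_nth.
have -> : (q == (p.1, p.2)) || (q == (p.2, p.1)) = false.
  rewrite -surjective_pairing; apply/negbTE; rewrite negb_or; apply/andP; split; apply/eqP => Eq.
    by rewrite Eq Hn in Hq.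
  by move: Hsq; rewrite Eq /= -surjective_pairing Hn.
by rewrite IH.
Qed.

Lemma uuniq_path (v0 : T) w : uniq (v0 :: w) -> uuniq (zip (v0 :: w) w).
Proof.
elim: w v0 => [|a w IH] v0 //= /andP [Hv0 Hu].
rewrite IH // andbT; apply/andP; split; apply/negP.
  by move/mem_zip1 => /= H; rewrite H in Hv0.
move/mem_zip2 => /= H; move: Hv0; rewrite inE H orbT //.
Qed.

Lemma uuniq_cycpart (a : T) t v : uniq (a :: rcons t v) -> uuniq (zip (a :: t) (rcons t v)).
Proof.
elim: t a => [|b t IH] a //= /andP [Ha Hu].
rewrite IH //; rewrite andbT; apply/andP; split; apply/negP.
  move/mem_zip1 => /= H; move: Ha.
  by rewrite -[b :: rcons t v]/(rcons (b :: t) v) mem_rcons inE H orbT.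
by move/mem_zip2 => /= H; rewrite inE H orbT in Ha.
Qed.

Lemma uuniq_cyc (v : T) t : uniq (v :: t) -> (3 <= size (v :: t))%N ->
  uuniq (zip (v :: t) (rcons t v)).
Proof.
case: t => [|a [|b t]] // Hun _.
have H := @uuniq_cycpart a (b :: t) v.
change (uuniq ((v, a) :: zip (a :: b :: t) (rcons (b :: t) v))).
move: Hun => /= /andP [Hv /andP [Ha /andP [Hb Hu]]].
rewrite !inE !negb_or in Hv Ha.
move: Hv Ha => /andP [Hva /andP [Hvb Hvt]] /andP [Hab Hat].
apply/and3P; split; last first.
- apply: H; rewrite -rcons_cons rcons_uniq /= !inE !negb_or.
  by rewrite Hva Hvb Hvt Hab Hat Hb Hu.
- apply/negP => /=; rewrite inE => /orP [/eqP [Evb]|].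
    by rewrite Evb eqxx in Hvb.
  by move/mem_zip1 => /=; rewrite inE (negbTE Hat) (negbTE Hab).
- apply/negP => /=; rewrite inE => /orP [/eqP [Eva _]|].
    by rewrite Eva eqxx in Hva.
  by move/mem_zip1 => /=; rewrite inE (negbTE Hvt) (negbTE Hvb).
Qed.
End UU.

Lemma uuniq_ear (m : nat) (E : sym_ear m) : ear_wf E -> @uuniq _ (ear_tlcs E).
Proof.
case: E => [[|v0 w]|[|v t]] //= /andP [Hu Hs].
  exact: uuniq_path.
exact: uuniq_cyc.
Qed.

Lemma delta_indep (R : fieldType) (n' k : nat) (K : 'I_k -> 'M[R]_n'.+1)
  (g : 'I_k -> 'I_n'.+1) : injective g ->
  (forall i, K i = kermx ((1%:M - delta_mx (g i) (g i))^T)) -> independent_family K.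
Proof.
move=> gi HK i.
have Htr : forall a : 'I_n'.+1, (1%:M - delta_mx a a : 'M[R]_n'.+1)^T = 1%:M - delta_mx a a.
  by move=> a; rewrite linearB /= trmx1 trmx_delta.
have HKj : forall j, K j *m delta_mx (g j) (g j) = K j.
  move=> j; apply/eqP; rewrite eq_sym -subr_eq0 -{1}[K j]mulmx1 -mulmxBr.
  by rewrite -Htr HK mulmx_ker.
set A := (K i :&: _)%MS.
have H1 : A *m (1%:M - delta_mx (g i) (g i)) = 0.
  apply/sub_kermxP; rewrite -Htr -HK; exact: capmxSl.
have H2 : A *m delta_mx (g i) (g i) = 0.
  apply/sub_kermxP; apply: submx_trans (capmxSr _ _) _.
  apply/sumsmx_subP => j Hj; apply/sub_kermxP.
  rewrite -HKj -mulmxA mul_delta_mx_0 ?mulmx0 //.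
  by apply: contra Hj => /eqP /gi ->.
by rewrite -[A]mulmx1 -[1%:M](subrK (delta_mx (g i) (g i))) mulmxDr H1 H2 addr0.
Qed.

Lemma delta_ker_nz (R : fieldType) (n' : nat) (a : 'I_n'.+1) :
  kermx ((1%:M - delta_mx a a : 'M[R]_n'.+1)^T) != 0.
Proof.
have Hu : ((delta_mx 0 a : 'rV[R]_n'.+1) <= kermx ((1%:M - delta_mx a a : 'M[R]_n'.+1)^T))%MS.
  by apply/sub_kermxP; rewrite linearB /= trmx1 trmx_delta mulmxBr mulmx1 mul_delta_mx subrr.
apply/negP => /eqP H; move: Hu; rewrite H submx0 => /eqP /matrixP /(_ 0 a).
by rewrite !mxE !eqxx /= => /eqP; rewrite oner_eq0.
Qed.

Lemma max_nth (A : Type) (x0 : A) (D : seq A) (F : A -> nat) t :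
  (t < size D)%N -> (F (nth x0 D t) <= \max_(E <- D) F E)%N.
Proof.
elim: D t => [|E D IH] [|t] //=; rewrite big_cons.
  by move=> _; apply: leq_maxl.
by move=> Ht; apply: leq_trans (IH t Ht) (leq_maxr _ _).
Qed.

Lemma find_ear (m : nat) (D : seq (sym_ear m)) t i j :
  (forall t1 t2, (t1 < size D)%N -> (t2 < size D)%N -> t1 != t2 ->
         forall i j, ear_arc (nth ear0 D t1) i j -> ~~ ear_arc (nth ear0 D t2) i j) ->
  (t < size D)%N -> ear_arc (nth ear0 D t) i j ->
  find (fun E => ear_arc E i j) D = t.
Proof.
move=> Hdisj Ht Ha.
have Hh : has (fun E => ear_arc E i j) D by apply/(has_nthP ear0); exists t.
have Hs : (find (fun E => ear_arc E i j) D < size D)%N by rewrite -has_find.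
case: (ltngtP (find (fun E => ear_arc E i j) D) t) => // H.
  have := nth_find ear0 Hh => Hf.
  by have := Hdisj _ _ Hs Ht (negbT (ltn_eqF H)) i j Hf; rewrite Ha.
by have := before_find ear0 H; rewrite Ha.
Qed.

Theorem theorem3 (R : realFieldType) (m n : nat) (e : rel 'I_m) (D : seq (sym_ear m)) :
  (2 <= m)%N -> sym_graph e -> no_self_arcs e -> two_connected e ->
  sym_ear_decomposition e D ->
  (forall (r : 'I_m -> 'I_m -> nat) (C : forall i j : 'I_m, 'M[R]_(r i j, n)),
      sym_weights C e ->
      (forall t, (t < size D)%N -> ear_kernels_independent C (nth ear0 D t)) ->
      well_configured C e)
  /\
  ((\max_(E <- D) ear_length E <= n)%N ->
   exists (r : 'I_m -> 'I_m -> nat) (C : forall i j : 'I_m, 'M[R]_(r i j, n)),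
     [/\ sym_weights C e,
         (forall i j, e i j -> kerC C i j != 0)
       & well_configured C e]).
Proof.
move=> Hm Hsym Hns H2c Hdec; split.
  by move=> r C _ Hind; exact: (@part1 R m n e D Hdec r C Hind).
move=> Hmax.
case: (Hdec) => [[Hhd Hwf] Hdisj Harcs Hcov Hatt].
have Hn : (0 < n)%N.
  have [s0 Hs0] : exists s, nth ear0 D 0 = SCycle s.
    by case: (D) Hhd => [|[s|s] D'] //; exists s.
  have HD : (0 < size D)%N by case: (D) Hhd.
  have Hw := all_nthP ear0 Hwf 0 HD; rewrite Hs0 in Hw.
  have := @max_nth _ ear0 D (@ear_length m) 0 HD; rewrite Hs0.
  move: Hw; case: s0 {Hs0} => [|v s] //= /andP [_ Hs] Hl.
  apply: leq_trans Hmax; apply: leq_trans Hl.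
  by rewrite /ear_length /= size_zip /= size_rcons minnn.
case: n Hn Hmax => [|n'] // _ Hmax.
pose f (i j : 'I_m) := find (fun p => (p == (i, j)) || (p == (j, i)))
   (ear_tlcs (nth ear0 D (find (fun E => ear_arc E i j) D))).
have fsym : forall i j, f i j = f j i.
  move=> i j; rewrite /f (@eq_find _ (fun E => ear_arc E i j) (fun E => ear_arc E j i)); last first.
    by move=> E; rewrite /ear_arc orbC.
  by apply: eq_find => p; rewrite orbC.
exists (fun _ _ => n'.+1), (fun i j => 1%:M - delta_mx (inord (f i j)) (inord (f i j))).
split.
- by move=> i j _; exists erefl; rewrite castmx_id fsym.
- by move=> i j _; exact: delta_ker_nz.
apply: (@part1 R m n'.+1 e D Hdec) => t Ht.
set tl := ear_tlcs (nth ear0 D t).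
have Hfk : forall k : 'I_(size tl), f (tnth (in_tuple tl) k).1 (tnth (in_tuple tl) k).2 = k.
  move=> k; rewrite (tnth_nth (tnth (in_tuple tl) k)) /=.
  set x0 := tnth _ k.
  rewrite /f (@find_ear m D t _ _ Hdisj Ht); last first.
    by rewrite /ear_arc -surjective_pairing mem_nth.
  apply: find_uuniq (ltn_ord k).
  apply: uuniq_ear; exact: (all_nthP ear0 Hwf).
have Hlt : forall k : 'I_(size tl), (k < n'.+1)%N.
  move=> k; apply: leq_trans (ltn_ord k) _; apply: leq_trans Hmax.
  exact: (@max_nth _ ear0 D (@ear_length m) t Ht).
apply: (@delta_indep _ n' _ _ (fun k => inord (f (tnth (in_tuple tl) k).1 (tnth (in_tuple tl) k).2))) => //.
move=> k1 k2 /(congr1 (@nat_of_ord _)); rewrite !Hfk !inordK ?Hlt //; exact: val_inj.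
Qed.
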